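(* Let $d\ge1$, let $\{e^j\}_{j=1}^d$ be the standard basis of $\mathbb{R}^d$, let $\|\cdot\|_2$ be the Euclidean norm, $B_2=\{x\in\mathbb{R}^d:\|x\|_2\le1\}$, and $B^o_2(x,r)=\{y:\|y-x\|_2<r\}$. Define $a:=\frac{2}{5d+1}$, $x^j:=ae^j$ for $j=1,\dots,d$, and $x^{d+1}:=-a\sum_{j=1}^de^j$. Then for every $r>(1-a^2)^{1/2}$, $$B_2\subset\bigcup_{j=1}^{d+1}B^o_2(x^j,r).$$ *)

(* Defs.v *)
From HB Require Import structures.
From mathcomp Require Import all_boot all_order all_algebra.
From mathcomp Require Import reals.
Set Implicit Arguments. Unset Strict Implicit. Unset Printing Implicit Defensive.
Import Order.TTheory GRing.Theory Num.Theory.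
Local Open Scope ring_scope.

Definition norm2 (R : realType) (d : nat) (x : 'rV[R]_d) : R :=
  Num.sqrt (\sum_(i < d) x ord0 i ^+ 2).

Definition B2 (R : realType) (d : nat) : pred 'rV[R]_d :=
  fun y => norm2 y <= 1.

Definition openB2 (R : realType) (d : nat) (x : 'rV[R]_d) (r : R) : pred 'rV[R]_d :=
  fun y => norm2 (y - x) < r.

Definition e_basis (R : realType) (d : nat) (j : 'I_d) : 'rV[R]_d :=
  \row_(i < d) (if i == j then 1 else 0).

Definition a_const (R : realType) (d : nat) : R := 2 / (5 * d%:R + 1).

(* The points x^1..x^{d+1}, indexed by k : 'I_(d+1) (0-based):
   k < d gives x^{k+1} = a e^{k+1}; k = d gives x^{d+1} = -a sum_j e^j. *)
Definition xpt (R : realType) (d : nat) (k : 'I_d.+1) : 'rV[R]_d :=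
  match unlift ord_max k with
  | Some j => a_const R d *: e_basis R j
  | None => - (a_const R d *: \sum_(j < d) e_basis R j)
  end.

(* Main.v *)
Require Import Defs.
From HB Require Import structures.
From mathcomp Require Import all_boot all_order all_algebra.
From mathcomp Require Import reals.
From mathcomp Require Import ring lra.
Import Order.TTheory GRing.Theory Num.Theory.
Local Open Scope ring_scope.

Lemma alg (R : realFieldType) (a D t c S : R) :
  1 <= D -> a * (5 * D + 1) = 2 -> 0 <= t -> t <= 1 ->
  2 * a * c = 2 * a ^+ 2 - (1 - t) ->
  t <= (c - 1) * S + D * c ->
  t + 2 * a * S + D * a ^+ 2 <= 1 - a ^+ 2.
Proof.
move=> hD ha ht0 ht1 hc hS.
have a0 : 0 < a by nra.
have a3 : a * 3 <= 1 by nra.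
have c1 : c <= a by nra.
have K0 : 0 <= 2 * a - 2 * D * a ^+ 2 - (D + 1) * a ^+ 2 * (1 - a).
  have -> : 2 * a - 2 * D * a ^+ 2 - (D + 1) * a ^+ 2 * (1 - a) = a^+2 * (2 * D) + (D+1) * a^+3 + a * (2 - a * (5 * D + 1)) by ring.
  rewrite ha subrr mulr0 addr0.
  have : 0 <= a ^+ 3 by rewrite exprn_ge0 // ltW.
  have : 0 <= a ^+ 2 by rewrite exprn_ge0 // ltW.
  nra.
have key : 2 * a * (D * c - t) <= (1 - t - (D + 1) * a ^+ 2) * (1 - c).
  nra.
have : (1 - c) * (2 * a * S) <= (1 - c) * (1 - t - (D + 1) * a ^+ 2) by nra.
move=> h; nra.
Qed.

Lemma sum_delta (R : realType) d (j : 'I_d) (g : 'I_d -> R) :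
  \sum_(i < d) (if i == j then g i else 0) = g j.
Proof.
rewrite (bigD1 j) //= eqxx big1 ?addr0 // => i /negbTE ->; done.
Qed.

Theorem proposition3p2 (R : realType) (d : nat) (hd : (1 <= d)%N) (r : R)
  (hr : Num.sqrt (1 - a_const R d ^+ 2) < r) :
  forall y : 'rV[R]_d, B2 y -> exists k : 'I_d.+1, openB2 (xpt R k) r y.
Proof.
move=> y; rewrite /B2 /norm2 -sqrtr1 ler_sqrt // => ht.
set a := a_const R d.
set t := \sum_(i < d) y ord0 i ^+ 2 in ht.
have ht0 : 0 <= t by apply: sumr_ge0 => i _; exact: sqr_ge0.
have hD : 1 <= (d%:R : R) by rewrite ler1n.
have ha : a * (5 * d%:R + 1) = 2.
  rewrite /a /a_const mulfVK //; apply: lt0r_neq0; lra.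
have yle : forall i, -1 <= y ord0 i.
  move=> i; have : y ord0 i ^+ 2 <= t.
    rewrite /t (bigD1 i) //= lerDl; apply: sumr_ge0 => k _; exact: sqr_ge0.
  move=> h; nra.
suff [k hk] : exists k : 'I_d.+1,
   \sum_(i < d) (y - xpt R k) ord0 i ^+ 2 <= 1 - a ^+ 2.
  exists k; rewrite /openB2 /norm2; apply: le_lt_trans hr.
  by rewrite ler_sqrt // (le_trans _ hk) //; apply: sumr_ge0 => i _; exact: sqr_ge0.
have ex : forall j : 'I_d, \sum_(i < d) (y - xpt R (lift ord_max j)) ord0 i ^+ 2
      = t - 2 * a * y ord0 j + a ^+ 2.
  move=> j; rewrite /xpt liftK.
  have E : forall i : 'I_d, (y - a *: e_basis R j) ord0 i ^+ 2 =
          y ord0 i ^+ 2 + (if i == j then - 2 * a * y ord0 i + a ^+ 2 else 0).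
    by move=> i; rewrite !mxE; case: (i == j); ring.
  by rewrite (eq_bigr _ (fun i _ => E i)) big_split /= sum_delta /t; ring.
have emax : \sum_(i < d) (y - xpt R ord_max) ord0 i ^+ 2
      = t + 2 * a * (\sum_(i < d) y ord0 i) + d%:R * a ^+ 2.
  rewrite /xpt unlift_none.
  have E1 : forall i : 'I_d, \sum_(j < d) e_basis R j ord0 i = 1.
    move=> i; rewrite (eq_bigr (fun j => if j == i then 1 else 0)) ?sum_delta //.
    by move=> j _; rewrite mxE eq_sym.
  have E : forall i : 'I_d, (y - - (a *: \sum_(j < d) e_basis R j)) ord0 i ^+ 2 =
          y ord0 i ^+ 2 + 2 * a * y ord0 i + a ^+ 2.
    by move=> i; rewrite !mxE summxE E1; ring.
  rewrite (eq_bigr _ (fun i _ => E i)).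
  rewrite !big_split /= -mulr_sumr sumr_const card_ord /t -mulr_natl; ring.
case: (boolP [exists j : 'I_d, 2 * a ^+ 2 - (1 - t) <= 2 * a * y ord0 j]).
  case/existsP => j hj; exists (lift ord_max j); rewrite ex; lra.
rewrite negb_exists => /forallP hall.
exists ord_max; rewrite emax.
set c := (2 * a ^+ 2 - (1 - t)) / (2 * a).
have a0 : 0 < a by nra.
have hc : 2 * a * c = 2 * a ^+ 2 - (1 - t).
  by rewrite /c mulrC mulfVK //; apply: lt0r_neq0; lra.
refine (@alg R a (d%:R) t c _ hD ha ht0 ht hc _).
have hyc : forall i, y ord0 i <= c.
  move=> i; have := hall i; rewrite -ltNge => h.
  rewrite -(ler_pM2l (_ : 0 < 2 * a)); [lra | lra].
have -> : (c - 1) * (\sum_(i < d) y ord0 i) + d%:R * c = \sum_(i < d) ((c - 1) * y ord0 i + c).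
  by rewrite big_split /= sumr_const card_ord -mulr_sumr mulr_natl.
rewrite /t.
apply: ler_sum => i _; have := hyc i; have := yle i; nra.
Qed.
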